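(* Let $n\ge 2$, $\mathcal{O}\in\mathcal{C}_{sp}^{(n)}$, $\nu\in(0,1]$, and $\mathcal{J}\in\mathbf{J}_{\mathcal{O}}^{\nu}$. Then there is a constant $\mu_{n,\nu}$ depending only on $n$ and $\nu$ such that $\|\mathcal{J}\|_2\le\mu_{n,\nu}$, $0\le\mu_{n,\nu}<1$.
   Context: $\imath=\sqrt{-1}$. For $1\le i<j\le n$ and real $\phi,\alpha$, $R(i,j,\phi,\alpha)$ is the $n\times n$ matrix equal to $I_n$ except for entries $(i,i)=(j,j)=\cos\phi$, $(i,j)=-e^{\imath\alpha}\sin\phi$, $(j,i)=e^{-\imath\alpha}\sin\phi$. Let $N=n(n-1)/2$. For $A=(a_{st})\in\mathbb{C}^{n\times n}$ let $c_t=(a_{1t},\dots,a_{t-1,t})^T$, $r_s=(a_{s1},\dots,a_{s,s-1})$ ($2\le s,t\le n$) and $\mathrm{ve}(A)=[c_2^T,\dots,c_n^T,r_2,\dots,r_n]^T\in\mathbb{C}^{2N}$. Let $\nu_{ij}$ be the linear map on $\mathbb{C}^{n\times n}$ setting entries $(i,j),(j,i)$ to zero. For $U=R(i,j,\phi,\alpha)$ the Jacobi annihilator $\mathcal{R}_{ij}(U)$ is the $2N\times 2N$ matrix with $\mathcal{R}_{ij}(U)\mathrm{ve}(A)=\mathrm{ve}(\nu_{ij}(U^*AU))$ for all $A$. For $\nu\in[0,1]$, $\mathbf{R}_{ij}^{\nu}=\{\mathcal{R}_{ij}(U): U=R(i,j,\phi,\alpha),\ |\cos\phi|\ge\nu\}$.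 Let $\mathcal{P}_n=\{(r,s):1\le r<s\le n\}$. For an ordering $\mathcal{O}=(i_0,j_0),\dots,(i_{N-1},j_{N-1})$ of $\mathcal{P}_n$ (each pair exactly once), $\mathbf{J}_{\mathcal{O}}^{\nu}=\{\mathcal{R}_{i_{N-1}j_{N-1}}\cdots\mathcal{R}_{i_0j_0}: \mathcal{R}_{i_kj_k}\in\mathbf{R}_{i_kj_k}^{\nu}\}$ is the class of Jacobi operators; $\|\cdot\|_2$ is the spectral norm. Orderings: $\mathcal{C}_c^{(n)}$ is the set of orderings $(1,2),(\tau_3(1),3),(\tau_3(2),3),\dots,(\tau_n(1),n),\dots,(\tau_n(n-1),n)$ with $\tau_j$ a permutation of $\{1,\dots,j-1\}$; $\mathcal{C}_r^{(n)}$ is the set of orderings $(n-1,n),(n-2,\tau_{n-2}(n-1)),(n-2,\tau_{n-2}(n)),\dots,(1,\tau_1(2)),\dots,(1,\tau_1(n))$ with $\tau_i$ a permutation of $\{i+1,\dots,n\}$, $1\le i\le n-2$. The reverse $\mathcal{O}^{\leftarrow}$ of $(i_0,j_0),\dots,(i_r,j_r)$ is $(i_r,j_r),\dots,(i_0,j_0)$. $\overleftarrow{\mathcal{C}}_c^{(n)}$ and $\overleftarrow{\mathcal{C}}_r^{(n)}$ are the sets of orderings whose reverses lie in $\mathcal{C}_c^{(n)}$, resp. $\mathcal{C}_r^{(n)}$, and $\mathcal{C}_{sp}^{(n)}=\mathcal{C}_c^{(n)}\cup\overleftarrow{\mathcal{C}}_c^{(n)}\cup\mathcal{C}_r^{(n)}\cup\overleftarrow{\mathcal{C}}_r^{(n)}$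 (serial orderings with permutations). *)

(* Defs.v *)
From HB Require Import structures.
From mathcomp Require Import all_boot all_order all_algebra.
From mathcomp Require Import boolp classical_sets reals trigo.
From mathcomp.real_closed Require Import complex.
Set Implicit Arguments. Unset Strict Implicit. Unset Printing Implicit Defensive.
Import Order.TTheory GRing.Theory Num.Theory.
Local Open Scope ring_scope.
Local Open Scope complex_scope.

(* Indices are 0-based: the paper's index s in {1..n} is s-1 here. *)

Definition dimN (n : nat) : nat := (n * n.-1) %/ 2.

(* strictly-upper pairs (s,t), s < t < n, ordered by t then s:
   this is the order of the entries of c_2, ..., c_n. *)
Definition upairs (n : nat) : seq (nat * nat) :=
  flatten [seq [seq (s, t) | s <- iota 0 t] | t <- iota 0 n].

(* entry (s,t) of a matrix, given by nat indices (0 outside the range) *)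
Definition mentry (R : realType) (n : nat) (A : 'M[R[i]]_n) (s t : nat) : R[i] :=
  match (insub s : option 'I_n), (insub t : option 'I_n) with
  | Some i, Some j => A i j
  | _, _ => 0
  end.

(* ve(A) = [c_2^T, ..., c_n^T, r_2, ..., r_n]^T in C^{2N} *)
Definition ve (R : realType) (n : nat) (A : 'M[R[i]]_n) : 'cV[R[i]]_(dimN n + dimN n) :=
  \col_(k < dimN n + dimN n)
    (if (k < dimN n)%N
     then let p := nth (0%N, 0%N) (upairs n) k in mentry A p.1 p.2
     else let p := nth (0%N, 0%N) (upairs n) (k - dimN n) in mentry A p.2 p.1).

Definition nu_ij (R : realType) (n : nat) (i j : nat) (A : 'M[R[i]]_n) : 'M[R[i]]_n :=
  \matrix_(p, q)
    (if ((p == i :> nat) && (q == j :> nat)) || ((p == j :> nat) && (q == i :> nat))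
     then 0 else A p q).

Definition cexpi (R : realType) (alpha : R) : R[i] := cos alpha +i* sin alpha.

Definition rotm (R : realType) (n : nat) (i j : nat) (phi alpha : R) : 'M[R[i]]_n :=
  \matrix_(p, q)
    (if ((p == i :> nat) && (q == i :> nat)) || ((p == j :> nat) && (q == j :> nat))
     then (cos phi)%:C
     else if (p == i :> nat) && (q == j :> nat) then - (cexpi alpha * (sin phi)%:C)
     else if (p == j :> nat) && (q == i :> nat) then cexpi (- alpha) * (sin phi)%:C
     else if p == q then 1 else 0).

Definition adjm (R : realType) (n : nat) (U : 'M[R[i]]_n) : 'M[R[i]]_n :=
  map_mx (@conjc R) U^T.

Definition is_annihilator (R : realType) (n : nat) (i j : nat) (U : 'M[R[i]]_n)
  (M : 'M[R[i]]_(dimN n + dimN n)) : Prop :=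
  forall A : 'M[R[i]]_n, M *m ve A = ve (nu_ij i j (adjm U *m A *m U)).

Definition annih_class (R : realType) (n : nat) (nu : R) (i j : nat)
  (M : 'M[R[i]]_(dimN n + dimN n)) : Prop :=
  exists phi alpha : R, nu <= `|cos phi| /\ @is_annihilator R n i j (@rotm R n i j phi alpha) M.

(* J belongs to J_O^nu: J = M_{N-1} ... M_0 with M_k in R^nu_{i_k j_k} *)
Definition jacobi_class (R : realType) (n : nat) (nu : R) (O : seq (nat * nat))
  (J : 'M[R[i]]_(dimN n + dimN n)) : Prop :=
  exists Ms : seq 'M[R[i]]_(dimN n + dimN n),
    size Ms = size O /\
    (forall k, (k < size O)%N ->
       @annih_class R n nu (nth (0%N, 0%N) O k).1 (nth (0%N, 0%N) O k).2 (nth 0 Ms k)) /\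
    J = foldl (fun acc M => M *m acc) 1%:M Ms.

Definition in_Cc (n : nat) (O : seq (nat * nat)) : Prop :=
  exists tau : nat -> seq nat,
    (forall t, (1 <= t < n)%N -> perm_eq (tau t) (iota 0 t)) /\
    O = flatten [seq [seq (s, t) | s <- tau t] | t <- iota 1 n.-1].

(* row-cyclic orderings with permutations C_r^(n):
   rows n-2, n-3, ..., 0 (0-based), row i visits (i, tau_i(.)) with tau_i a
   permutation of {i+1, ..., n-1}; for row n-2 this is forced to (n-2,n-1). *)
Definition in_Cr (n : nat) (O : seq (nat * nat)) : Prop :=
  exists tau : nat -> seq nat,
    (forall i, (i < n.-1)%N -> perm_eq (tau i) (iota i.+1 (n - i.+1))) /\
    O = flatten [seq [seq (i, s) | s <- tau i] | i <- rev (iota 0 n.-1)].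

Definition in_Csp (n : nat) (O : seq (nat * nat)) : Prop :=
  in_Cc n O \/ in_Cc n (rev O) \/ in_Cr n O \/ in_Cr n (rev O).

Definition cmod (R : realType) (z : R[i]) : R :=
  Num.sqrt (complex.Re z ^+ 2 + complex.Im z ^+ 2).

Definition vnorm2 (R : realType) (m : nat) (x : 'cV[R[i]]_m) : R :=
  Num.sqrt (\sum_(k < m) cmod (x k 0) ^+ 2).

Definition spec_norm (R : realType) (m : nat) (A : 'M[R[i]]_m) : R :=
  sup [set vnorm2 (A *m x) | x in [set x : 'cV[R[i]]_m | vnorm2 x <= 1]].

(* Main.v *)
Require Import Defs.
From HB Require Import structures.
From mathcomp Require Import all_boot all_order all_algebra.
From mathcomp Require Import boolp classical_sets reals trigo.
From mathcomp.real_closed Require Import complex.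
Set Warnings "-notation-overridden -ambiguous-paths -notation-incompatible-prefix".
From mathcomp Require Import lra ring zify.
Import Order.TTheory GRing.Theory Num.Theory.
Local Open Scope ring_scope.
Local Open Scope complex_scope.
Local Notation "x ^c" := (@conjc _ x).

Section Sq.
Context {R : realType}.
Local Notation C := R[i].
Definition sq (z : C) : R := complex.Re z ^+ 2 + complex.Im z ^+ 2.

Lemma sq_ge0 z : 0 <= sq z.
Proof. by rewrite /sq addr_ge0 // sqr_ge0. Qed.

Lemma sqM a b : sq (a*b) = sq a * sq b.
Proof. case: a => a1 a2; case: b => b1 b2; rewrite /sq /=. ring. Qed.

Lemma sqD a b : sq (a+b) <= 2 * (sq a + sq b).
Proof. case: a => a1 a2; case: b => b1 b2; rewrite /sq /=.
have h1 := sqr_ge0 (a1 - b1). have h2 := sqr_ge0 (a2 - b2). nra. Qed.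


Lemma sqJ z : sq (z^*)%C = sq z.
Proof. case: z => a b; rewrite /sq /=. ring. Qed.

Lemma sqC z : (sq z)%:C = z * (z^*)%C.
Proof. case: z => a b; rewrite /sq /= /GRing.mul /=. apply/eqP; rewrite eq_complex /=; apply/andP; split; apply/eqP; ring. Qed.

Lemma sq0 : sq 0 = 0.
Proof. by rewrite /sq /= expr0n /= addr0. Qed.

Lemma sqN z : sq (- z) = sq z.
Proof. case: z => a b; rewrite /sq /=. ring. Qed.

Lemma sqR (x : R) : sq x%:C = x ^+ 2.
Proof. by rewrite /sq /= expr0n /= addr0. Qed.

Lemma sqB a b : sq (a-b) <= 2 * (sq a + sq b).
Proof. by rewrite -(sqN b) sqD. Qed.

End Sq.


Section Step.
Context {R : realType} {n : nat}.
Local Notation C := R[i].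
Local Notation M := 'M[C]_n.

Lemma cjK (z : C) : z^c^c = z.
Proof. by case: z => a b; rewrite /= opprK. Qed.
Lemma cjD (a b : C) : (a + b)^c = a^c + b^c.
Proof. by case: a => a1 a2; case: b => b1 b2; apply/eqP; rewrite eq_complex /= opprD !eqxx. Qed.
Lemma cjM (a b : C) : (a * b)^c = a^c * b^c.
Proof. case: a => a1 a2; case: b => b1 b2; apply/eqP; rewrite eq_complex /=.
by apply/andP; split; apply/eqP; ring. Qed.
Lemma cjn (b : bool) : (b%:R : C)^c = b%:R.
Proof. by case: b; apply/eqP; rewrite eq_complex /= ?oppr0 !eqxx. Qed.
Lemma sqC' (z : C) : (sq z)%:C = z * z^c.
Proof. case: z => a b; rewrite /sq /=; apply/eqP; rewrite eq_complex /=; apply/andP; split; apply/eqP; ring. Qed.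
Lemma RcD (x y : R) : (x + y)%:C = x%:C + y%:C :> C.
Proof. by apply/eqP; rewrite eq_complex /= addr0 !eqxx. Qed.
Lemma Rc1 : (1 : R)%:C = 1 :> C.
Proof. by []. Qed.
Lemma RcI (x y : R) : x%:C = y%:C :> C -> x = y.
Proof. by case. Qed.
Lemma cj0 : (0 : C)^c = 0.
Proof. by apply/eqP; rewrite eq_complex /= oppr0 !eqxx. Qed.

Definition offd (A : M) : M := \matrix_(p,q) (if p == q then 0 else A p q).
Definition step (i j : 'I_n) (U B : M) : M := offd (nu_ij i j (adjm U *m B *m U)).

Definition good (nu : R) (U : M) (i j : 'I_n) : Prop :=
  [/\ i != j,
   (forall p q : 'I_n, (p != i) && (p != j) || (q != i) && (q != j) -> U p q = (p == q)%:R),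
   [/\ sq (U i i) + sq (U i j) = 1, sq (U j i) + sq (U j j) = 1 &
       U i i * (U j i)^c + U i j * (U j j)^c = 0] &
   nu ^+ 2 <= sq (U i i) /\ nu ^+ 2 <= sq (U j j)].

Lemma sum_U nu U i j (X : 'I_n -> C) q : good nu U i j ->
  \sum_b X b * U b q = if (q == i) || (q == j) then X i * U i q + X j * U j q else X q.
Proof.
case=> ij hout _ _.
case: ifP => hq.
- rewrite (bigD1 i) //= (bigD1 j) /=; last by rewrite eq_sym.
  rewrite big1 ?addr0 ?addrA // => b /andP [bi bj].
  rewrite hout; last by rewrite bi bj.
  case: eqP => [eb|] /=; last by rewrite mulr0n mulr0.
  by move: hq; rewrite -eb (negbTE bi) (negbTE bj).
- have hq' : (q != i) && (q != j) by move: hq => /norP [-> ->].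
  rewrite (bigD1 q) //= big1 ?addr0.
  + by rewrite hout ?eqxx ?mulr1 // hq' orbT.
  + move=> b bq; rewrite hout; last by rewrite hq' orbT.
    by rewrite (negbTE bq) mulr0n mulr0.
Qed.

Lemma sum_Uc nu U i j (Y : 'I_n -> C) p : good nu U i j ->
  \sum_a (U a p)^c * Y a = if (p == i) || (p == j) then (U i p)^c * Y i + (U j p)^c * Y j else Y p.
Proof.
case=> ij hout _ _.
case: ifP => hq.
- rewrite (bigD1 i) //= (bigD1 j) /=; last by rewrite eq_sym.
  rewrite big1 ?addr0 ?addrA // => b /andP [bi bj].
  rewrite hout; last by rewrite bi bj.
  rewrite cjn; case: eqP => [eb|] /=; last by rewrite mulr0n mul0r.
  by move: hq; rewrite -eb (negbTE bi) (negbTE bj).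
- have hq' : (p != i) && (p != j) by move: hq => /norP [-> ->].
  rewrite (bigD1 p) //= big1 ?addr0.
  + rewrite hout; last by rewrite hq'.
    by rewrite cjn eqxx /= mul1r.
  + move=> b bq; rewrite hout; last by rewrite hq' orbT.
    by rewrite cjn (negbTE bq) mulr0n mul0r.
Qed.

Lemma good_sym nu U i j : good nu U i j -> good nu U j i.
Proof.
case=> ij hout [h1 h2 h3] [h4 h5]; split => //.
- by rewrite eq_sym.
- move=> p q hpq; apply: hout; move: hpq.
  by rewrite (andbC (p != j)) (andbC (q != j)).
- split; [by rewrite addrC|by rewrite addrC|].
  have := congr1 conjc h3; rewrite cj0 cjD !cjM !cjK => <-.
  by rewrite addrC mulrC [X in _ + X]mulrC.
Qed.

Lemma L2 (x y a b c d : C) : sq a + sq c = 1 -> sq b + sq d = 1 -> a * b^c + c * d^c = 0 ->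
  sq (x * a + y * b) + sq (x * c + y * d) = sq x + sq y.
Proof.
move=> H1 H2 H3.
have H1' : a * a^c + c * c^c = 1 by rewrite -!sqC' -RcD H1.
have H2' : b * b^c + d * d^c = 1 by rewrite -!sqC' -RcD H2.
have H3' : a^c * b + c^c * d = 0.
  by have := congr1 conjc H3; rewrite cj0 cjD !cjM !cjK mulrC [X in _ + X]mulrC.
apply: RcI; rewrite RcD (RcD (sq x)) !sqC' !cjD !cjM.
have E : forall X Y A B Cc D Xs Ys As Bs Cs Ds : C,
  (X*A + Y*B)*(Xs*As + Ys*Bs) + (X*Cc+Y*D)*(Xs*Cs+Ys*Ds) =
  X*Xs*(A*As + Cc*Cs) + Y*Ys*(B*Bs+D*Ds) + X*Ys*(A*Bs+Cc*Ds) + Y*Xs*(As*B+Cs*D).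
  by move=> *; ring.
by rewrite E H1' H2' H3 H3' !mulr1 !mulr0 !addr0.
Qed.

Lemma UBU_E (U B : M) p q :
  (adjm U *m B *m U) p q = \sum_b (\sum_a (U a p)^c * B a b) * U b q.
Proof.
rewrite !mxE; apply: eq_bigr => b _; rewrite !mxE; congr (_ * _).
by apply: eq_bigr => a _; rewrite !mxE.
Qed.

Lemma stepE i j U B p q : step i j U B p q =
  if p == q then 0 else if ((p == i) && (q == j)) || ((p == j) && (q == i)) then 0
  else (adjm U *m B *m U) p q.
Proof. by rewrite /step /offd /nu_ij !mxE. Qed.

Section G.
Context {nu : R} {U : M} {i j : 'I_n}.
Hypothesis g : good nu U i j.

Let sU X q := @sum_U nu U i j X q g.
Let sUc Y p := @sum_Uc nu U i j Y p g.

Lemma step_out B p q : p != q -> (p != i) && (p != j) -> (q != i) && (q != j) ->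
  step i j U B p q = B p q.
Proof.
move=> pq hp hq; rewrite stepE (negbTE pq).
move: (hp) (hq) => /andP [/negbTE pi /negbTE pj] /andP [/negbTE qi /negbTE qj].
rewrite pi pj /= UBU_E sU qi qj /= sUc pi pj /=.
by [].
Qed.

Lemma step_piv B : step i j U B i j = 0 /\ step i j U B j i = 0.
Proof.
case: g => ij _ _ _.
by rewrite !stepE !eqxx /= orbT (negbTE ij) eq_sym (negbTE ij).
Qed.

Lemma step_row B s q : (s != i) && (s != j) -> (q == i) || (q == j) ->
  step i j U B s q = B s i * U i q + B s j * U j q.
Proof.
move=> hs hq.
have sq' : s != q by apply/negP => /eqP e; move: hs; rewrite e; case/orP: hq => /eqP ->; rewrite eqxx ?andbF.
move: (hs) => /andP [/negbTE si /negbTE sj].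
rewrite stepE (negbTE sq') si sj /= UBU_E sU hq.
by rewrite !sUc si sj.
Qed.

Lemma step_col B s q : (s != i) && (s != j) -> (q == i) || (q == j) ->
  step i j U B q s = (U i q)^c * B i s + (U j q)^c * B j s.
Proof.
move=> hs hq.
have sq' : q != s by apply/negP => /eqP e; move: hs; rewrite -e; case/orP: hq => /eqP ->; rewrite eqxx ?andbF.
move: (hs) => /andP [/negbTE si /negbTE sj].
rewrite stepE (negbTE sq') si sj /= !andbF /= UBU_E sU si sj /=.
by rewrite sUc hq.
Qed.

Lemma sqJ' (z : C) : sq z^c = sq z.
Proof. case: z => a b; rewrite /sq /=. ring. Qed.

Lemma step_pair_row B s : (s != i) && (s != j) ->
  sq (step i j U B s i) + sq (step i j U B s j) = sq (B s i) + sq (B s j).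
Proof.
move=> hs; rewrite !step_row ?eqxx ?orbT //.
case: g => _ _ [h1 h2 h3] _.
exact: L2.
Qed.

Lemma step_pair_col B s : (s != i) && (s != j) ->
  sq (step i j U B i s) + sq (step i j U B j s) = sq (B i s) + sq (B j s).
Proof.
move=> hs; rewrite !step_col ?eqxx ?orbT //.
rewrite ![(_)^c * B _ s]mulrC.
case: g => _ _ [h1 h2 h3] _.
apply: L2; rewrite ?sqJ' //.
by rewrite !cjK -[LHS]cjK cjD !cjM !cjK h3 cj0.
Qed.

Lemma good_le1 : [/\ sq (U i j) <= 1, sq (U j i) <= 1, sq (U i i) <= 1 & sq (U j j) <= 1].
Proof.
case: g => _ _ [h1 h2 h3] _.
have := sq_ge0 (U i j); have := sq_ge0 (U j i); have := sq_ge0 (U i i); have := sq_ge0 (U j j).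
move=> *; split; lra.
Qed.

End G.

Lemma step_sym i j U B : step i j U B = step j i U B.
Proof.
apply/matrixP => p q; rewrite !stepE.
by rewrite orbC.
Qed.

End Step.

Section Sums.
Context {R : realType} {n : nat}.
Local Notation C := R[i].
Local Notation M := 'M[C]_n.

Definition offS (S : seq nat) (B : M) : R :=
  \sum_(p : 'I_n | val p \in S) \sum_(q : 'I_n | (val q \in S) && (p != q)) sq (B p q).
Definition colS (S : seq nat) (c : 'I_n) (B : M) : R :=
  \sum_(s : 'I_n | val s \in S) (sq (B s c) + sq (B c s)).

Lemma offS_ge0 S B : 0 <= offS S B.
Proof. by apply: sumr_ge0 => p _; apply: sumr_ge0 => q _; apply: sq_ge0. Qed.

Lemma colS_ge0 S c B : 0 <= colS S c B.
Proof. by apply: sumr_ge0 => p _; apply: addr_ge0; apply: sq_ge0. Qed.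

Lemma offS_mem S1 S2 B : S1 =i S2 -> offS S1 B = offS S2 B.
Proof.
move=> H; rewrite /offS; apply: eq_big => [p|p _]; first by rewrite H.
by apply: eq_bigl => q; rewrite H.
Qed.

Lemma colS_mem S1 S2 c B : S1 =i S2 -> colS S1 c B = colS S2 c B.
Proof. by move=> H; rewrite /colS; apply: eq_bigl => p; rewrite H. Qed.

Lemma offS_ext S (B B' : M) : (forall p q : 'I_n, val p \in S -> val q \in S -> p != q -> B p q = B' p q) ->
  offS S B = offS S B'.
Proof.
move=> H; rewrite /offS; apply: eq_bigr => p hp; apply: eq_bigr => q /andP [hq pq].
by rewrite H.
Qed.

Lemma offS_cons c S B : val c \notin S -> offS (val c :: S) B = offS S B + colS S c B.
Proof.
move=> cS; rewrite /offS /colS (bigD1 c) /=; last by rewrite inE eqxx.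
have E1 : forall p : 'I_n, ((val p \in (val c :: S)) && (p != c)) = (val p \in S).
  move=> p; rewrite inE val_eqE; case: eqP => [->|_] /=; last by rewrite andbT.
  by rewrite (negbTE cS).
rewrite (eq_bigl _ _ E1).
have E2 : \sum_(q : 'I_n | (val q \in (val c :: S)) && (c != q)) sq (B c q) =
          \sum_(q : 'I_n | val q \in S) sq (B c q).
  apply: eq_bigl => q; rewrite eq_sym E1 //.
rewrite E2.
have E3 : forall p : 'I_n, val p \in S ->
  \sum_(q : 'I_n | (val q \in (val c :: S)) && (p != q)) sq (B p q) =
  sq (B p c) + \sum_(q : 'I_n | (val q \in S) && (p != q)) sq (B p q).
  move=> p hp; rewrite (bigD1 c) /=; last first.
    rewrite inE eqxx /=; apply/eqP => pc; move: hp; rewrite pc; exact/negP.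
  congr (_ + _); apply: eq_bigl => q.
  rewrite -andbA [(p != q) && _]andbC andbA E1.
  by [].
rewrite (eq_bigr _ E3) !big_split /=. lra.
Qed.

Lemma colS_cons c j S B : val j \notin S ->
  colS (val j :: S) c B = sq (B j c) + sq (B c j) + colS S c B.
Proof.
move=> jS; rewrite /colS (bigD1 j) /=; last by rewrite inE eqxx.
congr (_ + _); apply: eq_bigl => p; rewrite inE val_eqE.
case: eqP => [->|] /=; last by rewrite andbT.
by rewrite (negbTE jS).
Qed.

Lemma offS_sub S1 S2 B : {subset S1 <= S2} -> offS S1 B <= offS S2 B.
Proof.
move=> sub; rewrite /offS.
rewrite [X in _ <= X](bigID (fun p : 'I_n => val p \in S1)) /=.
rewrite -[X in X <= _]addr0; apply: lerD; last first.
  by apply: sumr_ge0 => p _; apply: sumr_ge0 => q _; apply: sq_ge0.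
rewrite [X in _ <= X](eq_bigl (fun p : 'I_n => val p \in S1)); last first.
  by move=> p; case h: (val p \in S1); rewrite ?andbF ?andbT // sub.
apply: ler_sum => p _.
rewrite [X in _ <= X](bigID (fun q : 'I_n => val q \in S1)) /=.
rewrite -[X in X <= _]addr0; apply: lerD; last first.
  by apply: sumr_ge0 => q _; apply: sq_ge0.
rewrite le_eqVlt; apply/orP; left; apply/eqP; apply: eq_bigl => q.
by case h: (val q \in S1); rewrite ?(sub _ h) /= ?andbT ?andbF.
Qed.

Lemma colS_le_offS c S B : val c \notin S -> colS S c B <= offS (val c :: S) B.
Proof.
move=> cS; rewrite offS_cons // lerDr; exact: offS_ge0.
Qed.

Definition stepx (x : 'I_n * 'I_n * M) (B : M) := step x.1.1 x.1.2 x.2 B.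
Definition delta (x : 'I_n * 'I_n * M) (B : M) : R := sq (B x.1.1 x.1.2) + sq (B x.1.2 x.1.1).

Fixpoint sweep (B : M) (L : seq ('I_n * 'I_n * M)) : M :=
  match L with [::] => B | x :: L' => sweep (stepx x B) L' end.
Fixpoint dsum (B : M) (L : seq ('I_n * 'I_n * M)) : R :=
  match L with [::] => 0 | x :: L' => delta x B + dsum (stepx x B) L' end.

Lemma sweep_cat B L1 L2 : sweep B (L1 ++ L2) = sweep (sweep B L1) L2.
Proof. by elim: L1 B => //= x L1 IH B. Qed.

Lemma dsum_cat B L1 L2 : dsum B (L1 ++ L2) = dsum B L1 + dsum (sweep B L1) L2.
Proof. elim: L1 B => [|x L1 IH] B /=; first by rewrite add0r. rewrite IH. lra. Qed.

Lemma sweep_rcons B L x : sweep B (rcons L x) = stepx x (sweep B L).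
Proof. by rewrite -cats1 sweep_cat. Qed.

Lemma dsum_rcons B L x : dsum B (rcons L x) = dsum B L + delta x (sweep B L).
Proof. by rewrite -cats1 dsum_cat /= addr0. Qed.

Lemma delta_ge0 x B : 0 <= delta x B.
Proof. by rewrite /delta addr_ge0 // sq_ge0. Qed.

Lemma dsum_ge0 B L : 0 <= dsum B L.
Proof. elim: L B => //= x L IH B; by rewrite addr_ge0 ?delta_ge0. Qed.

Lemma step_offS nu U i j S B : good nu U i j -> val i \in S -> val j \in S ->
  offS S B = offS S (step i j U B) + (sq (B i j) + sq (B j i)).
Proof.
move=> g iS jS.
have ij : i != j by case: g.
set T := [seq x <- S | (x != val i) && (x != val j)].
have memT : S =i val i :: val j :: T.
  move=> x; rewrite !inE mem_filter.
  case: (eqVneq x (val i)) => [->|xi] /=; first by rewrite iS.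
  by case: (eqVneq x (val j)) => [->|xj] /=; [rewrite jS|].
have iT : val i \notin val j :: T.
  by rewrite inE mem_filter eqxx /= ?andbF ?orbF val_eqE.
have jT : val j \notin T by rewrite mem_filter eqxx /= ?andbF.
rewrite !(offS_mem _ _ _ memT) !offS_cons // !colS_cons //.
have [p1 p2] := step_piv g B; rewrite p1 p2 sq0 !add0r.
have hT : forall s : 'I_n, val s \in T -> (s != i) && (s != j).
  by move=> s; rewrite mem_filter -!val_eqE => /andP [].
have -> : offS T (step i j U B) = offS T B.
  apply: offS_ext => p q hp hq pq; by apply: (step_out g) => //; [exact: hT hp | exact: hT hq].
have E : colS T j (step i j U B) + colS T i (step i j U B) = colS T j B + colS T i B.
  rewrite /colS -!big_split /=; apply: eq_bigr => s hs.
  have h1 := step_pair_row g B s (hT _ hs).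
  have h2 := step_pair_col g B s (hT _ hs).
  lra.
lra.
Qed.

Definition allL (P : 'I_n * 'I_n * M -> Prop) (L : seq ('I_n * 'I_n * M)) := forall x, x \in L -> P x.

Lemma sweep_offS nu S B L :
  allL (fun x => good nu x.2 x.1.1 x.1.2 /\ val x.1.1 \in S /\ val x.1.2 \in S) L ->
  offS S B = offS S (sweep B L) + dsum B L.
Proof.
elim: L B => [|x L IH] B /=; first by rewrite addr0.
move=> H.
have [g [h1 h2]] := H x (mem_head _ _).
rewrite (@step_offS nu x.2 x.1.1 x.1.2 S B g h1 h2) (IH (stepx x B)).
  rewrite /stepx /delta; lra.
by move=> y hy; apply: H; rewrite inE hy orbT.
Qed.

End Sums.

Section Star.
Context {R : realType} {n : nat}.
Local Notation C := R[i].
Local Notation M := 'M[C]_n.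
Variable nu : R.
Hypothesis nu_gt0 : 0 < nu.
Hypothesis nu_le1 : nu <= 1.

Lemma AF (x x' y a b : C) : x' = y * a + x * b -> sq a <= 1 -> nu ^+ 2 <= sq b ->
  sq x <= (2 / nu ^+ 2) * (sq x' + sq y).
Proof.
move=> e ha hb.
have hxb : x * b = x' - y * a by rewrite e addrC addKr.
have h1 : sq x * sq b <= 2 * (sq x' + sq y).
  rewrite -sqM hxb; apply: le_trans (sqB _ _) _; rewrite sqM.
  have := sq_ge0 y; have := sq_ge0 a; have := sq_ge0 x'; nra.
have h2 : sq x * nu ^+ 2 <= 2 * (sq x' + sq y).
  apply: le_trans h1; apply: ler_wpM2l; [exact: sq_ge0 | exact: hb].
rewrite mulrAC ler_pdivlMr //; exact: exprn_gt0.
Qed.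

Lemma AR (x x' y y' a b d e : C) : x' = y * a + x * b -> y' = y * d + x * e ->
  sq a <= 1 -> sq b <= 1 -> sq e <= 1 -> nu ^+ 2 <= sq d ->
  sq x' <= (6 / nu ^+ 2) * (sq y' + sq x).
Proof.
move=> e1 e2 ha hb he hd.
have hy : sq y <= (2 / nu ^+ 2) * (sq y' + sq x).
  by apply: (AF y y' x e d) => //; rewrite e2 addrC.
have hx' : sq x' <= 2 * (sq y + sq x).
  rewrite e1; apply: le_trans (sqD _ _) _; rewrite !sqM.
  have := sq_ge0 y; have := sq_ge0 x; have := sq_ge0 a; have := sq_ge0 b; nra.
have k0 : 0 < nu ^+ 2 by exact: exprn_gt0.
have k1 : nu ^+ 2 <= 1 by rewrite expr_le1 // ltW.
rewrite mulrAC ler_pdivlMr //.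
move: hy; rewrite mulrAC ler_pdivlMr // => hy.
have := sq_ge0 x; have := sq_ge0 y'; have := sq_ge0 y; nra.
Qed.

Variable c : 'I_n.
Definition oth (x : 'I_n * 'I_n * M) : 'I_n := if x.1.1 == c then x.1.2 else x.1.1.
Definition starP (x : 'I_n * 'I_n * M) := good nu x.2 x.1.1 x.1.2 /\ ((x.1.1 == c) || (x.1.2 == c)).
Definition SL (L : seq ('I_n * 'I_n * M)) : seq nat := map (fun x => val (oth x)) L.

Lemma star_norm x : starP x ->
  [/\ good nu x.2 (oth x) c, (forall B, stepx x B = step (oth x) c x.2 B),
      (forall B, delta x B = sq (B (oth x) c) + sq (B c (oth x))) & oth x != c].
Proof.
case=> g h; rewrite /oth /stepx /delta.
case: eqP => [e|ne].
- rewrite -e; split.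
  + exact: good_sym.
  + by move=> B; rewrite step_sym.
  + by move=> B; rewrite addrC.
  + by case: g => ij _; rewrite eq_sym.
- have e : x.1.2 = c by move: h => /orP [/eqP //|/eqP].
  rewrite -e; split => //; by case: g.
Qed.

Fixpoint KF (m : nat) : R := if m is m'.+1 then 1 + (2 / nu ^+ 2) * (KF m' + 1) else 0.
Fixpoint KR (m : nat) : R := if m is m'.+1 then (6 / nu ^+ 2) * (1 + KR m') else 0.

Lemma k2_ge0 : 0 <= 2 / nu ^+ 2.
Proof. by rewrite divr_ge0 // ?exprn_ge0 // ltW. Qed.
Lemma k6_ge0 : 0 <= 6 / nu ^+ 2.
Proof. by rewrite divr_ge0 // ?exprn_ge0 // ltW. Qed.

Lemma KF_ge0 m : 0 <= KF m.
Proof. elim: m => //= m IH; have := k2_ge0; nra. Qed.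
Lemma KR_ge0 m : 0 <= KR m.
Proof. elim: m => //= m IH; have := k6_ge0; nra. Qed.

Lemma SL_cons x L : SL (x :: L) = val (oth x) :: SL L.
Proof. by []. Qed.

Lemma SL_notc L s : allL starP L -> val s \in SL L -> s != c.
Proof.
move=> hall /mapP [y hy e].
have [_ _ _ yc] := star_norm y (hall y hy).
by have -> : s = oth y by apply: val_inj.
Qed.

Lemma colS_nil c' (B : M) : colS [::] c' B = 0.
Proof. by rewrite /colS big_pred0. Qed.

Lemma starF L B : allL starP L -> uniq (SL L) ->
  colS (SL L) c B <= KF (size L) * (dsum B L + offS (SL L) B).
Proof.
elim: L B => [|x L IH] B.
  by move=> _ _; rewrite /= colS_nil mul0r.
rewrite SL_cons /= => hall /andP [qL uL].
have [g hstep hdelta qc] := star_norm x (hall x (mem_head _ _)).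
set q := oth x in g hstep hdelta qc qL *.
have hallL : allL starP L by move=> y hy; apply: hall; rewrite inE hy orbT.
have hs : forall s : 'I_n, val s \in SL L -> (s != q) && (s != c).
  move=> s hsL; rewrite (@SL_notc L s hallL hsL) andbT.
  by apply/eqP => sq_; move: qL; rewrite -sq_ hsL.
set B' := stepx x B.
have IH' := IH B' hallL uL.
rewrite colS_cons // offS_cons // -hdelta.
have off_eq : offS (SL L) B' = offS (SL L) B.
  apply: offS_ext => p r hp hr pr; rewrite /B' hstep.
  by apply: (step_out g) => //; [exact: hs | exact: hs].
have [le_qc _ _ le_cc] := good_le1 g.
have [_ _ _ [_ ge_cc]] := g.
have bound : colS (SL L) c B <= (2 / nu ^+ 2) * (colS (SL L) c B' + colS (SL L) q B).
  rewrite /colS -big_split mulr_sumr; apply: ler_sum => s hsL.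
  have hs' := hs s hsL.
  have r1 : B' s c = B s q * x.2 q c + B s c * x.2 c c.
    by rewrite /B' hstep (step_row g) // eqxx orbT.
  have r2 : B' c s = B q s * (x.2 q c)^c + B c s * (x.2 c c)^c.
    by rewrite /B' hstep (step_col g) // ?eqxx ?orbT // mulrC [X in _ + X]mulrC.
  have a1 := @AF _ _ _ _ _ r1 le_qc ge_cc.
  have l1 : sq ((x.2 q c)^c) <= 1 by rewrite sqJ'.
  have l2 : nu ^+ 2 <= sq ((x.2 c c)^c) by rewrite sqJ'.
  have a2 := @AF _ _ _ _ _ r2 l1 l2.
  rewrite !mulrDr; rewrite !mulrDr in a1 a2; lra.
rewrite off_eq in IH'.
set K := KF (size L) in IH' *.
set k := 2 / nu ^+ 2 in bound *.
set T := sq (B q c) + sq (B c q) + dsum B' L + (offS (SL L) B + colS (SL L) q B).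
have K0 : 0 <= K by exact: KF_ge0.
have k0 : 0 <= k by exact: k2_ge0.
have d0 : 0 <= dsum B' L by exact: dsum_ge0.
have o0 : 0 <= offS (SL L) B by exact: offS_ge0.
have cq0 : 0 <= colS (SL L) q B by exact: colS_ge0.
have s0 : 0 <= sq (B q c) + sq (B c q) by rewrite addr_ge0 // sq_ge0.
have h1 : colS (SL L) c B' + colS (SL L) q B <= (K + 1) * T.
  have : K * (dsum B' L + offS (SL L) B) <= K * T.
    by apply: ler_wpM2l => //; rewrite /T; lra.
  rewrite mulrDl mul1r /T; lra.
have h2 : k * (colS (SL L) c B' + colS (SL L) q B) <= k * ((K + 1) * T).
  by apply: ler_wpM2l.
rewrite -/T mulrDl mul1r -mulrA.
rewrite hdelta; rewrite /T in h2 *; lra.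
Qed.

Lemma starR L B : allL starP L -> uniq (SL L) ->
  colS (SL L) c (sweep B L) <= KR (size L) * (dsum B L + offS (SL L) (sweep B L)).
Proof.
elim/last_ind: L => [|L x IH].
  by move=> _ _; rewrite /= colS_nil mul0r.
rewrite /SL map_rcons -/(SL L) rcons_uniq size_rcons => hall /andP [qL uL].
have [g hstep hdelta qc] := star_norm x (hall x ltac:(by rewrite mem_rcons mem_head)).
set q := oth x in g hstep hdelta qc qL *.
have hallL : allL starP L by move=> y hy; apply: hall; rewrite mem_rcons inE hy orbT.
have hs : forall s : 'I_n, val s \in SL L -> (s != q) && (s != c).
  move=> s hsL; rewrite (@SL_notc L s hallL hsL) andbT.
  by apply/eqP => sq_; move: qL; rewrite -sq_ hsL.
have IH' := IH hallL uL.
set E' := sweep B L in IH' *.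
rewrite sweep_rcons dsum_rcons -/E'.
set E := stepx x E'.
have mem1 : rcons (SL L) (val q) =i val q :: SL L by move=> z; rewrite mem_rcons.
rewrite (colS_mem _ _ _ _ mem1) (offS_mem _ _ _ mem1) colS_cons // offS_cons //.
have [p1 p2] := step_piv g E'.
have -> : sq (E q c) + sq (E c q) = 0 by rewrite /E hstep p1 p2 sq0 addr0.
rewrite add0r.
have off_eq : offS (SL L) E' = offS (SL L) E.
  apply: offS_ext => p r hp hr pr; rewrite /E hstep.
  by rewrite (step_out g) //; [exact: hs | exact: hs].
have [le_qc le_cq le_qq le_cc] := good_le1 g.
have [_ _ _ [ge_qq ge_cc]] := g.
have bound : colS (SL L) c E <= (6 / nu ^+ 2) * (colS (SL L) q E + colS (SL L) c E').
  rewrite /colS -big_split mulr_sumr; apply: ler_sum => s hsL.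
  have hs' := hs s hsL.
  have r1 : E s c = E' s q * x.2 q c + E' s c * x.2 c c.
    by rewrite /E hstep (step_row g) // eqxx orbT.
  have r1' : E s q = E' s q * x.2 q q + E' s c * x.2 c q.
    by rewrite /E hstep (step_row g) // eqxx.
  have r2 : E c s = E' q s * (x.2 q c)^c + E' c s * (x.2 c c)^c.
    by rewrite /E hstep (step_col g) // ?eqxx ?orbT // mulrC [X in _ + X]mulrC.
  have r2' : E q s = E' q s * (x.2 q q)^c + E' c s * (x.2 c q)^c.
    by rewrite /E hstep (step_col g) // ?eqxx ?orbT // mulrC [X in _ + X]mulrC.
  have a1 := @AR _ _ _ _ _ _ _ _ r1 r1' le_qc le_cc le_cq ge_qq.
  have l1 : sq ((x.2 q c)^c) <= 1 by rewrite sqJ'.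
  have l2 : sq ((x.2 c c)^c) <= 1 by rewrite sqJ'.
  have l3 : sq ((x.2 c q)^c) <= 1 by rewrite sqJ'.
  have l4 : nu ^+ 2 <= sq ((x.2 q q)^c) by rewrite sqJ'.
  have a2 := @AR _ _ _ _ _ _ _ _ r2 r2' l1 l2 l3 l4.
  rewrite !mulrDr; rewrite !mulrDr in a1 a2; lra.
rewrite -off_eq.
set K := KR (size L) in IH' *.
set k := 6 / nu ^+ 2 in bound *.
have K0 : 0 <= K by exact: KR_ge0.
have k0 : 0 <= k by exact: k6_ge0.
have d0 : 0 <= dsum B L by exact: dsum_ge0.
have dl0 : 0 <= delta x E' by exact: delta_ge0.
have o0 : 0 <= offS (SL L) E' by exact: offS_ge0.
have cq0 : 0 <= colS (SL L) q E by exact: colS_ge0.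
set T := dsum B L + delta x E' + (offS (SL L) E' + colS (SL L) q E).
have h1 : colS (SL L) q E + colS (SL L) c E' <= (1 + K) * T.
  have : K * (dsum B L + offS (SL L) E') <= K * T.
    by apply: ler_wpM2l => //; rewrite /T; lra.
  rewrite mulrDl mul1r /T; lra.
have h2 : k * (colS (SL L) q E + colS (SL L) c E') <= k * ((1 + K) * T).
  by apply: ler_wpM2l.
have -> : KR (size L).+1 = k * (1 + K) by []. 
rewrite -mulrA; lra.
Qed.

End Star.

Definition othN (c : nat) (x : nat * nat) : nat := if x.1 == c then x.2 else x.1.
Definition starO (c : nat) (P : seq (nat * nat)) (S' : seq nat) :=
  perm_eq (map (othN c) P) S' /\ (forall x, x \in P -> (x.1 == c) || (x.2 == c)).

Inductive GO : seq nat -> seq (nat * nat) -> Prop :=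
| GO0 S : (size S <= 1)%N -> GO S [::]
| GOf S c S' O' P : perm_eq S (c :: S') -> GO S' O' -> starO c P S' -> GO S (O' ++ P)
| GOr S c S' O' P : perm_eq S (c :: S') -> GO S' O' -> starO c P S' -> GO S (P ++ O').

Lemma size1_eq (S : seq nat) a b : (size S <= 1)%N -> a \in S -> b \in S -> a = b.
Proof. by case: S => [|x [|y s]] //= _; rewrite !inE => /eqP -> /eqP ->. Qed.

Lemma starO_pairs S c S' P : perm_eq S (c :: S') -> uniq S -> starO c P S' ->
  forall x, x \in P -> [/\ x.1 \in S, x.2 \in S & x.1 != x.2].
Proof.
move=> pS uS [hP hc] y hy.
have uc : uniq (c :: S') by rewrite -(perm_uniq pS).
move: (uc) => /andP [cS' uS'].
have memS : forall z, z \in S = (z == c) || (z \in S') by move=> z; rewrite (perm_mem pS) inE.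
have hoth : othN c y \in S' by rewrite -(perm_mem hP); apply: map_f.
move: (hc y hy); rewrite /othN in hoth; case: eqP hoth => [e1|ne1] hoth /= hy2.
- rewrite !memS e1 eqxx hoth orbT; split => //; apply/eqP => e; move: cS'; by rewrite e hoth.
- move/eqP: hy2 => e2; rewrite !memS e2 eqxx hoth /= orbT; split => //; apply/eqP => e.
  by move: cS'; rewrite -e hoth.
Qed.

Lemma GO_pairs S O : uniq S -> GO S O ->
  forall x, x \in O -> [/\ x.1 \in S, x.2 \in S & x.1 != x.2].
Proof.
move=> uS G; elim: G uS => {S O} [S _ _ x //|S c S' O' P pS G IH st uS x|S c S' O' P pS G IH st uS x].
all: have uc : uniq (c :: S') by rewrite -(perm_uniq pS).
all: move: (uc) => /andP [cS' uS'].
all: have memS : forall z, z \in S = (z == c) || (z \in S') by move=> z; rewrite (perm_mem pS) inE.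
all: rewrite mem_cat => /orP [].
- move=> /(IH uS') [h1 h2 h3]; by rewrite !memS h1 h2 !orbT.
- move=> hx; have := @starO_pairs S c S' P pS uS st x hx. by [].
- move=> hx; have := @starO_pairs S c S' P pS uS st x hx. by [].
- move=> /(IH uS') [h1 h2 h3]; by rewrite !memS h1 h2 !orbT.
Qed.

Section Main.
Context {R : realType} {n : nat}.
Local Notation C := R[i].
Local Notation M := 'M[C]_n.

Lemma offS_size1 S (B : M) : (size S <= 1)%N -> offS S B = 0.
Proof.
move=> h; rewrite /offS big1 // => p hp; rewrite big1 // => q /andP [hq pq].
by move: pq; rewrite (_ : p = q) ?eqxx //; apply: val_inj; exact: size1_eq h hp hq.
Qed.

Lemma colS_step_pres nu U i j T c (B : M) : good nu U i j -> val i \in T -> val j \in T -> val c \notin T ->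
  colS T c (step i j U B) = colS T c B.
Proof.
move=> g iT jT cT.
have ij : i != j by case: g.
set T' := [seq x <- T | (x != val i) && (x != val j)].
have memT : T =i val i :: val j :: T'.
  move=> x; rewrite !inE mem_filter.
  case: (eqVneq x (val i)) => [->|xi] /=; first by rewrite iT.
  by case: (eqVneq x (val j)) => [->|xj] /=; [rewrite jT|].
have iT' : val i \notin val j :: T'.
  by rewrite inE mem_filter eqxx /= ?andbF ?orbF val_eqE.
have jT' : val j \notin T' by rewrite mem_filter eqxx /= ?andbF.
have ci : c != i by apply/eqP => e; move: cT; rewrite e iT.
have cj : c != j by apply/eqP => e; move: cT; rewrite e jT.
have hc : (c != i) && (c != j) by rewrite ci cj.
rewrite !(colS_mem _ _ _ _ memT) !colS_cons //.
have -> : colS T' c (step i j U B) = colS T' c B.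
  apply: eq_bigr => s hs.
  have hs' : (s != i) && (s != j) by move: hs; rewrite mem_filter -!val_eqE => /andP [].
  have sc : s != c by apply/eqP => e; move: cT; rewrite -e; move: hs; rewrite mem_filter => /andP [_ ->].
  by rewrite !(step_out g) // eq_sym.
have h1 := step_pair_col g B c hc.
have h2 := step_pair_row g B c hc.
lra.
Qed.

Definition key (x : 'I_n * 'I_n * M) : nat * nat := (val x.1.1, val x.1.2).

Lemma colS_sweep_pres nu T c (B : M) L :
  allL (fun x => good nu x.2 x.1.1 x.1.2 /\ val x.1.1 \in T /\ val x.1.2 \in T) L -> val c \notin T ->
  colS T c (sweep B L) = colS T c B.
Proof.
elim: L B => [|x L IH] B //= H cT.
rewrite IH //; last by move=> y hy; apply: H; rewrite inE hy orbT.
have [g [h1 h2]] := H x (mem_head _ _).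
exact: (@colS_step_pres nu x.2 x.1.1 x.1.2 T c B g h1 h2 cT).
Qed.

Lemma key_split (L : seq ('I_n * 'I_n * M)) O1 O2 : map key L = O1 ++ O2 ->
  exists L1 L2, [/\ L = L1 ++ L2, map key L1 = O1 & map key L2 = O2].
Proof.
move=> h; exists (take (size O1) L), (drop (size O1) L).
by rewrite cat_take_drop map_take map_drop h take_size_cat // drop_size_cat.
Qed.

Lemma planes_in S O (L : seq ('I_n * 'I_n * M)) nu : uniq S -> GO S O -> map key L = O ->
  allL (fun x => good nu x.2 x.1.1 x.1.2) L ->
  allL (fun x => good nu x.2 x.1.1 x.1.2 /\ val x.1.1 \in S /\ val x.1.2 \in S) L.
Proof.
move=> uS G hL hall x hx; split; first exact: hall.
have : key x \in O by rewrite -hL; apply: map_f.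
by move/(@GO_pairs S O uS G) => [h1 h2 _].
Qed.

Lemma main_bound (nu : R) : 0 < nu -> nu <= 1 -> forall k, exists Cst : R, 0 <= Cst /\
  forall S O, size S = k -> uniq S -> (forall s, s \in S -> (s < n)%N) -> GO S O ->
  forall (L : seq ('I_n * 'I_n * M)) (B : M), map key L = O ->
  allL (fun x => good nu x.2 x.1.1 x.1.2) L -> offS S B <= Cst * dsum B L.
Proof.
move=> hgt hle; elim => [|k [C' [C'0 IH]]].
  exists 0; split => // S O hsz uS hS G L B hL hall.
  by rewrite offS_size1 ?hsz // mul0r.
set KFk := KF nu k; set KRk := KR nu k.
have KF0 : 0 <= KFk by exact: KF_ge0.
have KR0 : 0 <= KRk by exact: KR_ge0.
exists (C' + KFk + KFk * C' + KRk + KRk * C' + 1); split.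
  have := mulr_ge0 KF0 C'0; have := mulr_ge0 KR0 C'0; lra.
move=> S O hsz uS hS G L B hL hall.
destruct G as [S0 h1|S0 c S' O' P pS G' st|S0 c S' O' P pS G' st].
- by rewrite offS_size1 // mulr_ge0 ?dsum_ge0 //; have := mulr_ge0 KF0 C'0; have := mulr_ge0 KR0 C'0; lra.
-
  have uc : uniq (c :: S') by rewrite -(perm_uniq pS).
  move: (uc) => /andP [cS' uS'].
  have memS : forall z, z \in S0 = (z == c) || (z \in S') by move=> z; rewrite (perm_mem pS) inE.
  have hsz' : size S' = k by move: (perm_size pS) => /=; rewrite hsz => -[].
  have hS' : forall s, s \in S' -> (s < n)%N by move=> s hs; apply: hS; rewrite memS hs orbT.
  have hc : (c < n)%N by apply: hS; rewrite memS eqxx.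
  set cI := Ordinal hc.
  have [L1 [L2 [eL hL1 hL2]]] := @key_split L _ _ hL.
  have hall1 : allL (fun x => good nu x.2 x.1.1 x.1.2) L1 by move=> x hx; apply: hall; rewrite eL mem_cat hx.
  have hall2 : allL (fun x => good nu x.2 x.1.1 x.1.2) L2 by move=> x hx; apply: hall; rewrite eL mem_cat hx orbT.
  have IH1 := IH S' O' hsz' uS' hS' G' L1 B hL1 hall1.
  set B1 := sweep B L1.
  have [hP hcP] := st.
  have hstar : allL (starP nu cI) L2.
    move=> x hx; split; first exact: hall2.
    have := hcP (key x); rewrite -hL2 map_f // => /(_ isT).
    by rewrite /key /= -!val_eqE.
  have SLe : SL cI L2 = map (othN c) P.
    rewrite -hL2 -map_comp; apply: eq_map => x /=.
    by rewrite /oth /othN /key /= -val_eqE; case: ifP.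
  have uSL : uniq (SL cI L2) by rewrite SLe (perm_uniq hP).
  have memSL : SL cI L2 =i S' by rewrite SLe; exact: perm_mem.
  have szL2 : size L2 = k by rewrite -hsz' -(perm_size hP) size_map -hL2 size_map.
  have hF := @starF _ _ nu hgt cI L2 B1 hstar uSL.
  rewrite szL2 (colS_mem _ _ _ _ memSL) (offS_mem _ _ _ memSL) -/KFk in hF.
  have pl1 := @planes_in S' O' L1 nu uS' G' hL1 hall1.
  have pres : colS S' cI B1 = colS S' cI B by exact: (@colS_sweep_pres nu S' cI B L1 pl1 cS').
  have off1 := @sweep_offS _ _ nu S' B L1 pl1.
  have memc : S0 =i val cI :: S' by move=> z; rewrite memS inE.
  rewrite (offS_mem _ _ _ memc) offS_cons // -pres eL dsum_cat -/B1.
  have d1 : 0 <= dsum B L1 by exact: dsum_ge0.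
  have d2 : 0 <= dsum B1 L2 by exact: dsum_ge0.
  have o1 : 0 <= offS S' B1 by exact: offS_ge0.
  have e1 : offS S' B1 <= C' * dsum B L1 by lra.
  have e2 : KFk * offS S' B1 <= KFk * (C' * dsum B L1) by exact: ler_wpM2l.
  have e3 := mulr_ge0 KF0 C'0. have e4 := mulr_ge0 KR0 C'0.
  have e5 := mulr_ge0 C'0 d2. have e6 := mulr_ge0 KR0 d2. have e7 := mulr_ge0 KR0 d1.
  have e8 := mulr_ge0 e3 d2. have e9 := mulr_ge0 e4 d1. have e10 := mulr_ge0 e4 d2.
  rewrite ?mulrDl ?mulrDr in hF *; rewrite mulrA in e2.
  have e11 := mulr_ge0 KF0 d1. have e12 := mulr_ge0 KR0 d2. have e13 := mulr_ge0 KR0 d1. have e14 := mulr_ge0 KF0 d2. have e15 := mulr_ge0 C'0 d1. lra.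
-
  have uc : uniq (c :: S') by rewrite -(perm_uniq pS).
  move: (uc) => /andP [cS' uS'].
  have memS : forall z, z \in S0 = (z == c) || (z \in S') by move=> z; rewrite (perm_mem pS) inE.
  have hsz' : size S' = k by move: (perm_size pS) => /=; rewrite hsz => -[].
  have hS' : forall s, s \in S' -> (s < n)%N by move=> s hs; apply: hS; rewrite memS hs orbT.
  have hc : (c < n)%N by apply: hS; rewrite memS eqxx.
  set cI := Ordinal hc.
  have [L2 [L1 [eL hL2 hL1]]] := @key_split L _ _ hL.
  have hall1 : allL (fun x => good nu x.2 x.1.1 x.1.2) L1 by move=> x hx; apply: hall; rewrite eL mem_cat hx orbT.
  have hall2 : allL (fun x => good nu x.2 x.1.1 x.1.2) L2 by move=> x hx; apply: hall; rewrite eL mem_cat hx.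
  set B1 := sweep B L2.
  have IH1 := IH S' O' hsz' uS' hS' G' L1 B1 hL1 hall1.
  have [hP hcP] := st.
  have hstar : allL (starP nu cI) L2.
    move=> x hx; split; first exact: hall2.
    have := hcP (key x); rewrite -hL2 map_f // => /(_ isT).
    by rewrite /key /= -!val_eqE.
  have SLe : SL cI L2 = map (othN c) P.
    rewrite -hL2 -map_comp; apply: eq_map => x /=.
    by rewrite /oth /othN /key /= -val_eqE; case: ifP.
  have uSL : uniq (SL cI L2) by rewrite SLe (perm_uniq hP).
  have memSL : SL cI L2 =i S' by rewrite SLe; exact: perm_mem.
  have szL2 : size L2 = k by rewrite -hsz' -(perm_size hP) size_map -hL2 size_map.
  have hR := @starR _ _ nu hgt hle cI L2 B hstar uSL.
  rewrite szL2 (colS_mem _ _ _ _ memSL) (offS_mem _ _ _ memSL) -/KRk -/B1 in hR.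
  have pl2 : allL (fun x => good nu x.2 x.1.1 x.1.2 /\ val x.1.1 \in S0 /\ val x.1.2 \in S0) L2.
    move=> x hx; split; first exact: hall2.
    have : key x \in P by rewrite -hL2; apply: map_f.
    by move/(@starO_pairs S0 c S' P pS uS st) => [h1 h2 _].
  have off2 := @sweep_offS _ _ nu S0 B L2 pl2.
  have memc : S0 =i val cI :: S' by move=> z; rewrite memS inE.
  rewrite off2 -/B1 (offS_mem _ _ _ memc) offS_cons // eL dsum_cat -/B1.
  have d1 : 0 <= dsum B1 L1 by exact: dsum_ge0.
  have d2 : 0 <= dsum B L2 by exact: dsum_ge0.
  have o1 : 0 <= offS S' B1 by exact: offS_ge0.
  have e2 : KRk * offS S' B1 <= KRk * (C' * dsum B1 L1) by exact: ler_wpM2l.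
  have e3 := mulr_ge0 KF0 C'0. have e4 := mulr_ge0 KR0 C'0.
  have e5 := mulr_ge0 C'0 d2. have e6 := mulr_ge0 KF0 d2. have e7 := mulr_ge0 KF0 d1.
  have e8 := mulr_ge0 e3 d2. have e9 := mulr_ge0 e3 d1. have e10 := mulr_ge0 e4 d2.
  rewrite ?mulrDl ?mulrDr in hR *; rewrite mulrA in e2.
  have e11 := mulr_ge0 KF0 d1. have e12 := mulr_ge0 KR0 d2. have e13 := mulr_ge0 KR0 d1. have e14 := mulr_ge0 KF0 d2. have e15 := mulr_ge0 C'0 d1. have e16 := mulr_ge0 e4 d1. lra.
Qed.

End Main.

Definition colO (tau : nat -> seq nat) m := flatten [seq [seq (s, t) | s <- tau t] | t <- iota 1 m].
Definition rowO (tau : nat -> seq nat) k l := flatten [seq [seq (i, s) | s <- tau i] | i <- rev (iota k l)].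

Lemma starO_col c (sig S' : seq nat) : perm_eq sig S' -> c \notin S' ->
  starO c [seq (s, c) | s <- sig] S' /\ starO c (rev [seq (s, c) | s <- sig]) S'.
Proof.
move=> p cS.
have E : map (othN c) [seq (s, c) | s <- sig] = sig.
  rewrite -map_comp -[RHS]map_id; apply/eq_in_map => s hs /=.
  rewrite /othN /=; case: eqP => // e; move: cS; by rewrite -e -(perm_mem p) hs.
split; split.
- by rewrite E.
- by move=> x /mapP [s _ ->]; rewrite eqxx orbT.
- by rewrite map_rev E perm_rev.
- by move=> x; rewrite mem_rev => /mapP [s _ ->]; rewrite eqxx orbT.
Qed.

Lemma starO_row c (sig S' : seq nat) : perm_eq sig S' ->
  starO c [seq (c, s) | s <- sig] S' /\ starO c (rev [seq (c, s) | s <- sig]) S'.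
Proof.
move=> p.
have E : map (othN c) [seq (c, s) | s <- sig] = sig.
  rewrite -map_comp -[RHS]map_id; apply/eq_in_map => s hs /=.
  by rewrite /othN /= eqxx.
split; split.
- by rewrite E.
- by move=> x /mapP [s _ ->]; rewrite eqxx.
- by rewrite map_rev E perm_rev.
- by move=> x; rewrite mem_rev => /mapP [s _ ->]; rewrite eqxx.
Qed.

Lemma Cc_GO tau m : (forall t, (1 <= t <= m)%N -> perm_eq (tau t) (iota 0 t)) ->
  GO (iota 0 m.+1) (colO tau m) /\ GO (iota 0 m.+1) (rev (colO tau m)).
Proof.
elim: m => [|m IH] H.
  by split; apply: GO0.
have [G1 G2] : GO (iota 0 m.+1) (colO tau m) /\ GO (iota 0 m.+1) (rev (colO tau m)).
  by apply: IH => t /andP [h1 h2]; apply: H; rewrite h1 leqW.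
have eO : colO tau m.+1 = colO tau m ++ [seq (s, m.+1) | s <- tau m.+1].
  rewrite /colO; have -> : iota 1 m.+1 = iota 1 m ++ [:: m.+1] by have := iotaD 1 m 1; rewrite addn1 add1n.
  by rewrite map_cat flatten_cat /= cats0.
have pS : perm_eq (iota 0 m.+2) (m.+1 :: iota 0 m.+1).
  have -> : iota 0 m.+2 = iota 0 m.+1 ++ [:: m.+1] by have := iotaD 0 m.+1 1; rewrite addn1 add0n.
  by rewrite perm_catC.
have cS : m.+1 \notin iota 0 m.+1 by rewrite mem_iota ltnn andbF.
have [s1 s2] := @starO_col m.+1 _ _ (H m.+1 (leqnn _)) cS.
rewrite eO rev_cat; split.
- exact: GOf pS G1 s1.
- exact: GOr pS G2 s2.
Qed.

Lemma Cr_GO tau n l : forall k, (k + l).+1 = n ->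
  (forall i, (i < n.-1)%N -> perm_eq (tau i) (iota i.+1 (n - i.+1))) ->
  GO (iota k l.+1) (rowO tau k l) /\ GO (iota k l.+1) (rev (rowO tau k l)).
Proof.
elim: l => [|l IH] k hk H.
  by split; apply: GO0.
have [G1 G2] := IH k.+1 ltac:(by rewrite addSnnS) H.
have eO : rowO tau k l.+1 = rowO tau k.+1 l ++ [seq (k, s) | s <- tau k].
  by rewrite /rowO /= rev_cons -cats1 map_cat flatten_cat /= cats0.
have pS : perm_eq (iota k l.+2) (k :: iota k.+1 l.+1) by [].
have hk' : (k < n.-1)%N by rewrite -hk /=; lia.
have pt : perm_eq (tau k) (iota k.+1 l.+1).
  by have := H k hk'; have -> : (n - k.+1 = l.+1)%N by rewrite -hk; lia.
have [s1 s2] := @starO_row k _ _ pt.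
rewrite eO rev_cat; split.
- exact: GOf pS G1 s1.
- exact: GOr pS G2 s2.
Qed.

Lemma Csp_GO n O : (1 <= n)%N -> in_Csp n O -> GO (iota 0 n) O.
Proof.
case: n => // m _.
case=> [[tau [H ->]]|[[tau [H eO]]|[[tau [H ->]]|[tau [H eO]]]]].
- by case: (@Cc_GO tau m _) => // t /andP [h1 h2]; apply: H; rewrite h1 /= ltnS.
- rewrite -(revK O) eO.
  by case: (@Cc_GO tau m _) => // t /andP [h1 h2]; apply: H; rewrite h1 /= ltnS.
- by case: (@Cr_GO tau m.+1 m 0 erefl H).
- rewrite -(revK O) eO.
  by case: (@Cr_GO tau m.+1 m 0 erefl H).
Qed.

Lemma upairsS n : upairs n.+1 = upairs n ++ [seq (s, n) | s <- iota 0 n].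
Proof.
rewrite /upairs; have -> : iota 0 n.+1 = iota 0 n ++ [:: n] by have := iotaD 0 n 1; rewrite addn1 add0n.
by rewrite map_cat flatten_cat /= cats0.
Qed.

Lemma upairs_mem n x : (x \in upairs n) = (x.1 < x.2 < n)%N.
Proof.
case: x => a b.
elim: n => [|n IH]; first by rewrite /upairs /= ltn0 andbF.
rewrite upairsS mem_cat IH /=.
apply/idP/idP.
- case/orP => [/andP [h1 h2]|/mapP [s]]; first by rewrite h1 ltnS ltnW.
  by rewrite mem_iota add0n => /andP [_ hs] [-> ->]; rewrite hs ltnS leqnn.
- move=> /andP [h1 h2]; rewrite ltnS leq_eqVlt in h2; case/orP: h2 => [/eqP e|h2].
  + apply/orP; right; apply/mapP; exists a; last by rewrite e.
    by rewrite mem_iota add0n -e h1.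
  + by rewrite h1 h2.
Qed.

Lemma upairs_uniq n : uniq (upairs n).
Proof.
elim: n => [|n IH] //; rewrite upairsS cat_uniq IH /=.
apply/andP; split.
- apply/hasPn => x /mapP [s hs ->]; rewrite upairs_mem /= ltnn andbF //.
- rewrite map_inj_uniq ?iota_uniq // => a b [] //.
Qed.

Lemma dimN_bin n : dimN n = 'C(n, 2).
Proof. by rewrite /dimN divn2 bin2. Qed.

Lemma upairs_size n : size (upairs n) = dimN n.
Proof.
rewrite dimN_bin; elim: n => [|n IH] //.
by rewrite upairsS size_cat IH size_map size_iota binS bin1 addnC.
Qed.

Lemma upairs_nth n k : (k < dimN n)%N ->
  let p := nth (0%N, 0%N) (upairs n) k in (p.1 < p.2 < n)%N.
Proof. by move=> hk /=; rewrite -upairs_mem mem_nth // upairs_size. Qed.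

Section VE.
Context {R : realType} {n : nat}.
Local Notation C := R[i].
Local Notation M := 'M[C]_n.

Lemma mentry_lt (A : M) s t (hs : (s < n)%N) (ht : (t < n)%N) :
  mentry A s t = A (Ordinal hs) (Ordinal ht).
Proof.
rewrite /mentry; case: insubP => [i' _ ei|/negP //]; case: insubP => [j' _ ej|/negP //].
by congr (A _ _); apply: val_inj.
Qed.

Lemma mentry_ord (A : M) (p q : 'I_n) : mentry A p q = A p q.
Proof.
case: p => p hp; case: q => q hq; exact: mentry_lt.
Qed.

Lemma ve_offd (X : M) : ve (offd X) = ve X.
Proof.
apply/matrixP => k z; rewrite !mxE.
case: ifP => hk /=.
- have := @upairs_nth n _ hk; set p := nth _ _ _ => /andP [h1 h2].
  have h0 : (p.1 < n)%N by apply: ltn_trans h2.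
  rewrite !(mentry_lt _ _ _ h0 h2) mxE.
  case: eqP => // e; exfalso; have e' : p.1 = p.2 by case: e.
  by rewrite e' ltnn in h1.
- have hk' : (k - dimN n < dimN n)%N.
    have := ltn_ord k; move: hk => /negbT; rewrite -leqNgt; lia.
  have := @upairs_nth n _ hk'; set p := nth _ _ _ => /andP [h1 h2].
  have h0 : (p.1 < n)%N by apply: ltn_trans h2.
  rewrite !(mentry_lt _ _ _ h2 h0) mxE.
  case: eqP => // e; exfalso; have e' : p.2 = p.1 by case: e.
  by rewrite e' ltnn in h1.
Qed.

Lemma cmod_sq (z : C) : cmod z ^+ 2 = sq z.
Proof. by rewrite /cmod sqr_sqrtr // addr_ge0 // sqr_ge0. Qed.

Lemma offS_tri (A : M) : offS (iota 0 n) A =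
  \sum_(t : 'I_n) \sum_(s : 'I_n | (s < t)%N) (sq (A s t) + sq (A t s)).
Proof.
rewrite /offS.
transitivity (\sum_(p : 'I_n) \sum_(q : 'I_n | p != q) sq (A p q)).
  apply: eq_big => [p|p _]; first by rewrite mem_iota ltn_ord.
  by apply: eq_bigl => q; rewrite mem_iota ltn_ord.
have E1 : forall p : 'I_n, \sum_(q : 'I_n | p != q) sq (A p q) =
    \sum_(q : 'I_n | (q < p)%N) sq (A p q) + \sum_(q : 'I_n | (p < q)%N) sq (A p q).
  move=> p; rewrite (bigID (fun q : 'I_n => (q < p)%N)) /=; congr (_ + _); apply: eq_bigl => q;
  by rewrite -val_eqE /=; case: (ltngtP p q).
rewrite (eq_bigr _ (fun p _ => E1 p)) big_split /=.
rewrite [X in _ + X](eq_bigr (fun p : 'I_n => \sum_(q : 'I_n) (if (p < q)%N then sq (A p q) else 0))); last first.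
  by move=> p _; rewrite big_mkcond.
rewrite [X in _ + X]exchange_big /=.
rewrite [X in _ + X](eq_bigr (fun q : 'I_n => \sum_(p : 'I_n | (p < q)%N) sq (A p q))); last first.
  by move=> q _; rewrite [RHS]big_mkcond.
rewrite -big_split /=; apply: eq_bigr => t _; rewrite -big_split /=.
by apply: eq_bigr => s _; rewrite addrC.
Qed.

Lemma vnorm2_ve (A : M) : vnorm2 (ve A) = Num.sqrt (offS (iota 0 n) A).
Proof.
rewrite /vnorm2; congr Num.sqrt.
under eq_bigr do rewrite cmod_sq.
rewrite big_split_ord /=.
set N := dimN n.
set g := fun p : nat * nat => sq (mentry A p.1 p.2) + sq (mentry A p.2 p.1).
have L1 : \sum_(k < N) sq (ve A (lshift N k) 0) = \sum_(k < N) sq (mentry A (nth (0%N,0%N) (upairs n) k).1 (nth (0%N,0%N) (upairs n) k).2).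
  by apply: eq_bigr => k _; rewrite mxE /= ltn_ord.
have L2 : \sum_(k < N) sq (ve A (rshift N k) 0) = \sum_(k < N) sq (mentry A (nth (0%N,0%N) (upairs n) k).2 (nth (0%N,0%N) (upairs n) k).1).
  by apply: eq_bigr => k _; rewrite mxE /= ltnNge leq_addr /= addKn.
rewrite L1 L2 -big_split /=.
transitivity (\sum_(p <- upairs n) g p).
  by rewrite (big_nth (0%N, 0%N)) upairs_size big_mkord.
rewrite /upairs big_flatten big_map /= offS_tri.
have -> : iota 0 n = index_iota 0 n by rewrite /index_iota subn0.
rewrite big_mkord; apply: eq_bigr => t _.
rewrite big_map.
have -> : iota 0 t = index_iota 0 t by rewrite /index_iota subn0.
rewrite big_mkord (big_ord_widen _ (fun s => g (s, val t)) (ltnW (ltn_ord t))).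
by apply: eq_bigr => s _; rewrite /g /= !mentry_ord.
Qed.

Lemma ve_surj (x : 'cV[C]_(dimN n + dimN n)) : exists A : M, ve A = x.
Proof.
set N := dimN n.
pose xf (k : nat) : C := match (insub k : option 'I_(N + N)) with Some i => x i 0 | None => 0 end.
have xfE : forall k : 'I_(N + N), xf k = x k 0 by move=> k; rewrite /xf valK.
exists (\matrix_(p, q) (if (val p < val q)%N then xf (index (val p, val q) (upairs n))
   else if (val q < val p)%N then xf (N + index (val q, val p) (upairs n))%N else 0)).
apply/matrixP => k z; rewrite (ord1 z) !mxE.
have U := upairs_uniq n.
have nk : (N <= k)%N -> (N + (k - N))%N = k by move=> h; rewrite subnKC.
case: ifP => hk /=.
- have := @upairs_nth n _ hk; set p := nth _ _ _ => /andP [h1 h2].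
  have h0 : (p.1 < n)%N by apply: ltn_trans h2.
  rewrite (mentry_lt _ _ _ h0 h2) mxE /= h1 -surjective_pairing index_uniq ?upairs_size ?U //.
  try exact: xfE.
- have hk' : (k - N < N)%N.
    have := ltn_ord k; move: hk => /negbT; rewrite -leqNgt /N; lia.
  have := @upairs_nth n _ hk'; set p := nth _ _ _ => /andP [h1 h2].
  have h0 : (p.1 < n)%N by apply: ltn_trans h2.
  rewrite (mentry_lt _ _ _ h2 h0) mxE /= ltnNge (ltnW h1) /= h1 -surjective_pairing index_uniq ?upairs_size ?U //.
  rewrite nk; first exact: xfE.
  by move: hk => /negbT; rewrite -leqNgt.
Qed.

End VE.

Section Fin.
Context {R : realType} {n : nat}.
Local Notation C := R[i].
Local Notation M := 'M[C]_n.

Lemma rotm_good (nu phi alpha : R) (i j : 'I_n) : i != j -> 0 <= nu -> nu <= `|cos phi| ->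
  good nu (@rotm R n i j phi alpha) i j.
Proof.
move=> ij h0 h1.
have nij : (val i == val j) = false by rewrite val_eqE (negbTE ij).
have nji : (val j == val i) = false by rewrite val_eqE eq_sym (negbTE ij).
set U := @rotm R n i j phi alpha.
have Eii : U i i = (cos phi)%:C by rewrite /U mxE !eqxx.
have Ejj : U j j = (cos phi)%:C by rewrite /U mxE !eqxx orbT.
have Eij : U i j = - (cexpi alpha * (sin phi)%:C) by rewrite /U mxE !eqxx nij nji.
have Eji : U j i = cexpi (- alpha) * (sin phi)%:C by rewrite /U mxE !eqxx nij nji.
have ce : sq (cexpi alpha) = 1 by rewrite /sq /= cos2Dsin2.
have ce' : sq (cexpi (- alpha)) = 1 by rewrite /sq /= cos2Dsin2.
split => //.
- move=> p q H; rewrite /U mxE.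
  case/orP: H => /andP [pi pj].
  + have pi' : (val p == val i) = false by rewrite val_eqE (negbTE pi).
    have pj' : (val p == val j) = false by rewrite val_eqE (negbTE pj).
    by rewrite pi' pj' /=; case: (p == q).
  + have qi' : (val q == val i) = false by rewrite val_eqE (negbTE pi).
    have qj' : (val q == val j) = false by rewrite val_eqE (negbTE pj).
    by rewrite qi' qj' !andbF /=; case: (p == q).
- split.
  + by rewrite Eii Eij sqN sqM ce mul1r !sqR cos2Dsin2.
  + by rewrite Eji Ejj sqM ce' mul1r !sqR addrC cos2Dsin2.
  + rewrite Eii Eij Eji Ejj /cexpi cosN sinN.
    by apply/eqP; rewrite eq_complex /=; apply/andP; split; apply/eqP; ring.
- have e : `|cos phi| ^+ 2 = cos phi ^+ 2 by rewrite -normrX ger0_norm // sqr_ge0.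
  have := normr_ge0 (cos phi).
  by rewrite Eii Ejj sqR; split; nra.
Qed.

Local Notation MM := 'M[C]_(dimN n + dimN n).

Lemma foldl_mul (Ms : seq MM) (acc : MM) :
  foldl (fun acc M => M *m acc) acc Ms = foldl (fun acc M => M *m acc) 1%:M Ms *m acc.
Proof.
elim: Ms acc => [|M Ms IH] acc /=; first by rewrite mul1mx.
by rewrite IH [in RHS]IH mulmx1 mulmxA.
Qed.

Lemma transfer (nu : R) (O : seq (nat * nat)) (Ms : seq MM) : 0 <= nu ->
  (forall x, x \in O -> [/\ (x.1 < n)%N, (x.2 < n)%N & x.1 != x.2]) ->
  size Ms = size O ->
  (forall k, (k < size O)%N ->
     @annih_class R n nu (nth (0%N, 0%N) O k).1 (nth (0%N, 0%N) O k).2 (nth 0 Ms k)) ->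
  exists L : seq ('I_n * 'I_n * M), [/\ map key L = O,
    allL (fun x => good nu x.2 x.1.1 x.1.2) L &
    forall A : M, foldl (fun acc M => M *m acc) 1%:M Ms *m ve A = ve (sweep A L)].
Proof.
move=> h0; elim: O Ms => [|o O IH] [|Mx Ms] //= hO hsz hk.
  by exists [::]; split => // A; rewrite mul1mx.
have [ho1 ho2 ho3] := hO o (mem_head _ _).
have [L [hL hall hJ]] : exists L : seq ('I_n * 'I_n * M), [/\ map key L = O,
    allL (fun x => good nu x.2 x.1.1 x.1.2) L &
    forall A : M, foldl (fun acc M => M *m acc) 1%:M Ms *m ve A = ve (sweep A L)].
  apply: IH.
  - by move=> x hx; apply: hO; rewrite inE hx orbT.
  - by case: hsz.
  - by move=> k hk'; apply: (hk k.+1).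
have [phi [alpha [hphi hann]]] := hk 0%N isT.
set iI := Ordinal ho1; set jI := Ordinal ho2.
have ij : iI != jI by rewrite -val_eqE.
have g : good nu (@rotm R n iI jI phi alpha) iI jI by exact: rotm_good.
exists ((iI, jI, @rotm R n iI jI phi alpha) :: L); split.
- by rewrite /= hL /key /= -surjective_pairing.
- move=> x; rewrite inE => /orP [/eqP -> //|hx]; exact: hall.
- move=> A; rewrite foldl_mul -mulmxA mulmx1 hann -ve_offd.
  by rewrite -hJ.
Qed.

End Fin.


Theorem theorem3p3 (R : realType) (n : nat) (hn : (2 <= n)%N) (nu : R)
  (hnu : 0 < nu <= 1) :
  exists mu : R, 0 <= mu < 1 /\
    forall (O : seq (nat * nat)), in_Csp n O ->
    forall J : 'M[R[i]]_(dimN n + dimN n), @jacobi_class R n nu O J ->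
      @spec_norm R (dimN n + dimN n) J <= mu.
Proof.
have [hgt hle] := andP hnu.
have [C0 [C0ge H]] := @main_bound R n nu hgt hle n.
set Cst := C0 + 1.
have Cst1 : 1 <= Cst by rewrite /Cst lerDr.
have Cst0 : 0 < Cst by apply: lt_le_trans Cst1.
set q := Cst^-1.
have q0 : 0 < q by rewrite invr_gt0.
have qC : q * Cst = 1 by rewrite mulVf // gt_eqF.
have q1 : q <= 1 by nra.
exists (Num.sqrt (1 - q)); split.
  rewrite sqrtr_ge0 /= -{2}sqrtr1 ltr_sqrt //; lra.
move=> O hO J [Ms [hsz [hk eJ]]].
have G := @Csp_GO n O (ltnW hn) hO.
have uS : uniq (iota 0 n) by exact: iota_uniq.
have hpairs : forall x, x \in O -> [/\ (x.1 < n)%N, (x.2 < n)%N & x.1 != x.2].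
  move=> x hx; have [h1 h2 h3] := @GO_pairs _ _ uS G x hx.
  by move: h1 h2; rewrite !mem_iota /= => h1 h2; split.
have [L [hL hall hJL]] := @transfer R n nu O Ms (ltW hgt) hpairs hsz hk.
rewrite /spec_norm; apply: ge_sup.
  exists (vnorm2 (J *m 0)); exists 0 => //=.
  rewrite /vnorm2 big1 ?sqrtr0 // => k _; rewrite mxE /cmod /= expr0n /= addr0 sqrtr0 expr0n.
  by [].
move=> y [x hx <-].
have [A eA] := ve_surj x.
move: hx; rewrite /= -eA vnorm2_ve -{1}sqrtr1 ler_sqrt // => hx.
rewrite eJ hJL vnorm2_ve ler_sqrt; last by lra.
have pl := @planes_in R n (iota 0 n) O L nu uS G hL hall.
have hsw := @sweep_offS R n nu (iota 0 n) A L pl.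
have hb := H (iota 0 n) O (size_iota 0 n) uS (fun s hs => ltac:(by move: hs; rewrite mem_iota)) G L A hL hall.
have d0 := dsum_ge0 A L.
have o0 := offS_ge0 (iota 0 n) A.
have o1 := offS_ge0 (iota 0 n) (sweep A L).
set off := offS (iota 0 n) A in hx hsw hb o0.
set D := dsum A L in hsw hb d0.
have h1 : off <= Cst * D by rewrite /Cst mulrDl mul1r; lra.
have h2 : off * q <= D.
  have := ler_wpM2l (ltW q0) h1; rewrite mulrA [q * Cst]qC mul1r mulrC; exact.
have q2 : 0 <= 1 - q by lra.
have h3 : off * (1 - q) <= 1 - q by nra.
rewrite mulrBr mulr1 in h3.
lra.
Qed.
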